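(* Let $\Omega$ be a finite set of $M$ states and consider a time series $\omega^{1}\omega^{2}\omega^{3}\cdots$ with $\omega^{i}\in\Omega$. Let $\Pi$ be its predictability and $R$ the Bayes error rate of the $M$-classification problem whose samples are indexed by the time steps $i=1,\dots,n$, with sample $i$ having class label $\omega^{i}$ and feature $x_{i-1}=\omega^{1}\cdots\omega^{i-1}$, the series before that state ($x_0=\varnothing$), in the limit $n\to\infty$. Then $$\Pi = 1-R.$$
   Context: Predictability: for $n\ge 1$ let $x_{n-1}=\omega^{1}\cdots\omega^{n-1}$ denote the history before time $n$. Let $\pi(x_{n-1})=\sup_{\omega\in\Omega}\Pr[\omega^{n}=\omega\mid x_{n-1}]$ be the probability of the most probable next state given the history. The predictability of the $n$-th state is $\Pi(n)=\sum_{x_{n-1}}P(x_{n-1})\,\pi(x_{n-1})$, where $P(x_{n-1})$ is the probability of observing the history $x_{n-1}$ and the sum runs over all possible histories of length $n-1$. The overall predictability is $\Pi=\lim_{n\to\infty}\frac{1}{n}\sum_{i=1}^{n}\Pi(i)$. Bayes error rate: for an $M$-class problem with classes $\omega_1,\dots,\omega_M$, prior probabilities $p(\omega_j)$, feature set $X'$ and class-conditional densities $p(x\mid\omega_j)$, $$R=1-\sum_{j=1}^{M}\int_{\Gamma_j}p(\omega_j)\,p(x\mid\omega_j)\,dx,$$ where $\Gamma_j=\{x\in X' : p(\omega_j)p(x\mid\omega_j)>\max_{k\neq j}p(\omega_k)p(x\mid\omega_k)\}$. *)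

(* Defs.v *)
From HB Require Import structures.
From mathcomp Require Import all_boot all_order all_algebra.
From mathcomp Require Import all_classical all_reals all_analysis.
Set Implicit Arguments. Unset Strict Implicit. Unset Printing Implicit Defensive.
Import Order.TTheory GRing.Theory Num.Theory.
Local Open Scope ring_scope.

Section Defs.
Variables (R : realType) (Om : finType).

(* The law of the time series w^1 w^2 ... is given by its finite-dimensional
   distributions: P s = probability that the series starts with the word s. *)
Definition is_process_law (P : seq Om -> R) : Prop :=
  [/\ P [::] = 1, (forall s, 0 <= P s) &
      (forall s, P s = \sum_(w : Om) P (rcons s w))].

Variable P : seq Om -> R.

Definition cond_prob (x : seq Om) (w : Om) : R := P (rcons x w) / P x.

Definition pi_max (x : seq Om) : R := \big[Num.max/0]_(w : Om) cond_prob x w.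

Definition Pi_n (n : nat) : R := \sum_(x : n.-1.-tuple Om) P x * pi_max x.

Definition avg_Pi (n : nat) : R := n%:R^-1 * \sum_(1 <= i < n.+1) Pi_n i.

(* The classification problem with samples i = 1..n: sample i has class
   w^i and feature x_{i-1} (a word of length i-1 < n).
   prior n w = p(w) = (1/n) sum_i Pr[w^i = w]. *)
Definition prior (n : nat) (w : Om) : R :=
  n%:R^-1 * \sum_(1 <= i < n.+1) \sum_(x : i.-1.-tuple Om) P (rcons x w).

(* joint probability that a sample (uniform over i = 1..n) has feature x
   and class w *)
Definition joint (n : nat) (x : seq Om) (w : Om) : R :=
  if (size x < n)%N then n%:R^-1 * P (rcons x w) else 0.

Definition cdens (n : nat) (x : seq Om) (w : Om) : R := joint n x w / prior n w.

Definition discr (n : nat) (w : Om) (x : seq Om) : R := prior n w * cdens n x w.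

(* Bayes decision region Gamma_j: j attains the maximum of p(w)p(x|w);
   ties are broken in favour of the class of smallest enum_rank. *)
Definition Gamma (n : nat) (j : Om) (x : seq Om) : bool :=
  [forall k, discr n k x <= discr n j x] &&
  [forall k, (enum_rank k < enum_rank j)%N ==> (discr n k x < discr n j x)].

(* R = 1 - sum_j int_{Gamma_j} p(w_j) p(x|w_j) dx, the feature space being
   the words of length 0..n-1 (counting measure). *)
Definition bayes_error (n : nat) : R :=
  1 - \sum_(j : Om) \sum_(i < n) \sum_(x : i.-tuple Om | Gamma n j x) discr n j x.

End Defs.

(* Main.v *)
Require Import Defs.
From HB Require Import structures.
From mathcomp Require Import all_boot all_order all_algebra.
From mathcomp Require Import all_classical all_reals all_analysis.
Import Order.TTheory GRing.Theory Num.Theory.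
Import numFieldNormedType.Exports.
Local Open Scope classical_set_scope.
Local Open Scope ring_scope.

Section Aux.
Variables (R : realType) (Om : finType).

Lemma bigmax_ge0 (f : Om -> R) : 0 <= \big[Num.max/0]_w f w.
Proof. by apply: (big_rec (fun x => 0 <= x)) => // i x _ Hx; rewrite le_max Hx orbT. Qed.

Lemma bigmax_scale (c : R) (f : Om -> R) : 0 <= c ->
  c * \big[Num.max/0]_w f w = \big[Num.max/0]_w (c * f w).
Proof.
move=> c0; apply: (big_ind2 (fun a b => c * a = b)); first by rewrite mulr0.
  by move=> a a' b b' <- <-; rewrite maxr_pMr.
by [].
Qed.

Lemma bigmax_attained (f : Om -> R) (j : Om) :
  (forall k, f k <= f j) -> 0 <= f j -> \big[Num.max/0]_w f w = f j.
Proof.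
move=> Hj H0; apply/eqP; rewrite eq_le; apply/andP; split.
  by apply: (big_ind (fun x => x <= f j)) => // a b Ha Hb; rewrite ge_max Ha.
by rewrite (bigD1 j) //= le_max lexx.
Qed.

Definition G (f : Om -> R) (j : Om) : bool :=
  [forall k, f k <= f j] &&
  [forall k, (enum_rank k < enum_rank j)%N ==> (f k < f j)].

Lemma sum_G (f : Om -> R) : (forall w, 0 <= f w) ->
  \sum_(j | G f j) f j = \big[Num.max/0]_w f w.
Proof.
move=> f0.
case: (pickP (@predT Om)) => [m _|e]; last first.
  by rewrite !big_pred0 // => i; have := e i.
have [mx _ Hmx] : exists2 mx, true & forall k, f k <= f mx.
  have [i _ Hi] := @arg_maxP _ R Om m xpredT f isT.
  by exists i => // k; apply: Hi.
pose Q := fun j => f j == f mx.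
have [j Qj Hj] := @arg_minnP Om mx Q (fun j => enum_rank j) (eqxx _).
have fj : f j = f mx by apply/eqP.
have Gj : G f j.
  apply/andP; split; apply/forallP => k; first by rewrite fj.
  apply/implyP => Hk; rewrite lt_neqAle fj Hmx andbT.
  apply/negP => /eqP E; have := Hj k (introT eqP E).
  by rewrite leqNgt Hk.
rewrite (@bigmax_attained f j) ?fj //.
rewrite (big_pred1 j) // => k; apply/idP/eqP => [Gk|->//].
apply/eqP; apply: contraT => nkj.
move: Gj Gk => /andP[/forallP G1 /forallP G2] /andP[/forallP G3 /forallP G4].
have ejk : f j = f k by apply/eqP; rewrite eq_le G1 G3.
have : enum_rank k != enum_rank j by apply: contra nkj => /eqP/enum_rank_inj->.
rewrite neq_ltn => /orP[H|H].
  by move: (implyP (G2 k) H); rewrite ejk ltxx.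
by move: (implyP (G4 j) H); rewrite ejk ltxx.
Qed.

End Aux.

Section Main.
Variables (R : realType) (Om : finType) (P : seq Om -> R).
Hypothesis HP : is_process_law P.

Lemma P_ge0 s : 0 <= P s.
Proof. by case: HP. Qed.

Lemma discr_eq n w x : discr P n w x = joint P n x w.
Proof.
rewrite /discr /cdens; case: (eqVneq (prior P n w) 0) => [p0|pn0]; last first.
  by rewrite mulrC divfK.
rewrite p0 mul0r /joint; case: ifP => // hs.
have H0 : 0 <= n%:R^-1 * P (rcons x w) by rewrite mulr_ge0 ?invr_ge0 ?ler0n ?P_ge0.
apply/eqP; rewrite eq_le; apply/andP; split=> //.
rewrite -p0 /prior ler_wpM2l ?invr_ge0 ?ler0n //.
rewrite (@big_cat_nat _ _ _ (size x).+1) //=; last exact: leq_trans hs (leqnSn n).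
rewrite (@big_ltn _ _ _ (size x).+1) //=.
have S0 : forall k, 0 <= \sum_(t : k.-tuple Om) P (rcons t w).
  by move=> k; apply: sumr_ge0 => t _; exact: P_ge0.
apply: (ler_wpDl (sumr_ge0 _ (fun i _ => S0 _))).
apply: (ler_wpDr (sumr_ge0 _ (fun i _ => S0 _))).
rewrite (bigD1 (in_tuple x)) //=; apply: ler_wpDr => //.
by apply: sumr_ge0 => t _; exact: P_ge0.
Qed.

Lemma Pi_eq x : P x * pi_max P x = \big[Num.max/0]_w P (rcons x w).
Proof.
rewrite /pi_max bigmax_scale ?P_ge0 //.
case: (eqVneq (P x) 0) => [p0|pn0].
  rewrite p0; apply: (big_ind2 (fun a b => a = b)) => //; first by move=> ? ? ? ? -> ->.
  move=> w _; rewrite mul0r.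
  case: HP => _ H0 Hs.
  by symmetry; apply: (@psumr_eq0P _ _ xpredT (fun w => P (rcons x w))) => //; rewrite -Hs.
by apply: eq_bigr => w _; rewrite /cond_prob mulrCA mulfV // mulr1.
Qed.

Lemma key n : bayes_error P n = 1 - avg_Pi P n.
Proof.
rewrite /bayes_error /avg_Pi; congr (_ - _).
rewrite exchange_big /= big_add1 /= big_mkord mulr_sumr.
apply: eq_bigr => i _.
rewrite /Pi_n /= mulr_sumr.
under eq_bigr do rewrite big_mkcond.
rewrite exchange_big /=; apply: eq_bigr => x _.
rewrite -big_mkcond.
rewrite (_ : \sum_(j | Gamma P n j x) discr P n j x =
   \sum_(j | G _ _ (fun w => discr P n w x) j) discr P n j x) //.
rewrite sum_G; last by move=> w; rewrite discr_eq /joint; case: ifP => // _;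
  rewrite mulr_ge0 ?invr_ge0 ?ler0n ?P_ge0.
under eq_bigr do rewrite discr_eq /joint size_tuple ltn_ord.
by rewrite -bigmax_scale ?invr_ge0 ?ler0n // Pi_eq.
Qed.

End Main.

Theorem theorem1 (R : realType) (Om : finType) (P : seq Om -> R) :
  is_process_law P ->
  forall l : R,
    ((fun n => avg_Pi P n) @ \oo --> l) <->
    ((fun n => bayes_error P n) @ \oo --> 1 - l).
Proof.
move=> HP l.
have E : (fun n => bayes_error P n) = (fun n => 1 - avg_Pi P n).
  by apply: funext => n; rewrite key.
have E' : (fun n => avg_Pi P n) = (fun n => 1 - bayes_error P n).
  by apply: funext => n; rewrite key // subKr.
split => H.
  by rewrite E; apply: cvgB => //; exact: cvg_cst.
by rewrite E' -[X in _ --> X](subKr 1 l); apply: cvgB => //; exact: cvg_cst.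
Qed.
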